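(* On $\mathrm{Mon}_+$ consider the relation $\varphi_0\sim\varphi_1$ iff there exist $v\in L^2([0,1],H^1_0([0,1]))$ and a Lagrangian flow $\varphi$ associated with $v$ such that $\varphi(0,x)=\varphi_0(x)$ and $\varphi(1,x)=\varphi_1(x)$ for all $x\in[0,1]$. This relation is symmetric and transitive, and in fact $\varphi_0\sim\varphi_1$ holds for every pair $\varphi_0,\varphi_1\in\mathrm{Mon}_+$.
   Context: $\mathrm{Mon}_+$ denotes the set of nondecreasing functions $f:[0,1]\to[0,1]$ with $f(0)=0$ and $f(1)=1$. Definition (Lagrangian flow): let $v\in L^1([0,1],C([0,1]))$. A map $\varphi:[0,1]\times[0,1]\to[0,1]$, $(t,x)\mapsto\varphi(t,x)$, is a Lagrangian flow associated with $v$ if (i) $x\mapsto\varphi(t,x)$ is nondecreasing for every $t$, and (ii) for every $x$ the map $t\mapsto\varphi(t,x)$ is absolutely continuous and $\varphi(t,x)-\varphi(s,x)=\int_s^t v(r,\varphi(r,x))\,dr$ for all $0\le s<t\le 1$. *)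

(* Defs.v *)
(* Lebesgue integration on compact intervals
   is introduced via the Henstock–Kurzweil (gauge) integral: a function is
   Lebesgue integrable on [a,b] iff it and its absolute value are
   HK-integrable, and then both integrals coincide. *)
From Stdlib Require Import Reals List.
Open Scope R_scope.

(* A tagged division of [a,b], as a list of (left end, right end, tag),
   which is fine with respect to the gauge delta. *)
Fixpoint fine_div (delta : R -> R) (a b : R) (l : list (R * R * R)) : Prop :=
  match l with
  | nil => a = b
  | (u, w, c) :: l' =>
      u = a /\ u < w /\ u <= c /\ c <= w /\
      c - u < delta c /\ w - c < delta c /\ fine_div delta w b l'
  end.

Fixpoint rsum (f : R -> R) (l : list (R * R * R)) : R :=
  match l with
  | nil => 0
  | (u, w, c) :: l' => f c * (w - u) + rsum f l'
  end.

Definition HK_int (f : R -> R) (a b I : R) : Prop :=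
  a <= b /\
  forall eps, 0 < eps ->
    exists delta : R -> R, (forall x, 0 < delta x) /\
      forall l, fine_div delta a b l -> Rabs (rsum f l - I) < eps.

Definition L_int (f : R -> R) (a b I : R) : Prop :=
  HK_int f a b I /\ exists J, HK_int (fun x => Rabs (f x)) a b J.

Definition L_integrable (f : R -> R) (a b : R) : Prop :=
  exists I, L_int f a b I.

Definition L_measurable (f : R -> R) (a b : R) : Prop :=
  forall M, 0 < M -> L_integrable (fun x => Rmax (- M) (Rmin M (f x))) a b.

Definition L2 (f : R -> R) (a b : R) : Prop :=
  L_measurable f a b /\ L_integrable (fun x => (f x) ^ 2) a b.

(* v in L^2([0,1], H^1_0([0,1])), v t x = v(t)(x) (a representative with
   v(t) in H^1_0 for every t). g t is the weak derivative of v t. *)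
Definition L2_H10 (v : R -> R -> R) : Prop :=
  exists g : R -> R -> R,
    (forall t, 0 <= t <= 1 ->
       L2 (g t) 0 1 /\
       (forall x, 0 <= x <= 1 -> L_int (g t) 0 x (v t x)) /\
       v t 1 = 0) /\
    (forall x, 0 <= x <= 1 -> L_measurable (fun t => v t x) 0 1) /\
    exists n : R -> R,
      (forall t, 0 <= t <= 1 -> L_int (fun y => (g t y) ^ 2) 0 1 (n t)) /\
      L_integrable n 0 1.

Fixpoint ordered_intervals (l : list (R * R)) : Prop :=
  match l with
  | nil => True
  | p :: l' =>
      fst p <= snd p /\
      (match l' with nil => True | q :: _ => snd p <= fst q end) /\
      ordered_intervals l'
  end.

Definition abs_cont (f : R -> R) (a b : R) : Prop :=
  forall eps, 0 < eps -> exists delta, 0 < delta /\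
    forall l : list (R * R),
      Forall (fun p => a <= fst p /\ snd p <= b) l ->
      ordered_intervals l ->
      fold_right (fun p s => (snd p - fst p) + s) 0 l < delta ->
      fold_right (fun p s => Rabs (f (snd p) - f (fst p)) + s) 0 l < eps.

Definition Mon_plus (f : R -> R) : Prop :=
  (forall x y, 0 <= x -> x <= y -> y <= 1 -> f x <= f y) /\
  (forall x, 0 <= x <= 1 -> 0 <= f x <= 1) /\
  f 0 = 0 /\ f 1 = 1.

Definition lagrangian_flow (v : R -> R -> R) (phi : R -> R -> R) : Prop :=
  (forall t x, 0 <= t <= 1 -> 0 <= x <= 1 -> 0 <= phi t x <= 1) /\
  (forall t x y, 0 <= t <= 1 -> 0 <= x -> x <= y -> y <= 1 ->
     phi t x <= phi t y) /\
  (forall x, 0 <= x <= 1 ->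
     abs_cont (fun t => phi t x) 0 1 /\
     forall s t, 0 <= s -> s < t -> t <= 1 ->
       L_int (fun r => v r (phi r x)) s t (phi t x - phi s x)).

Definition flow_rel (phi0 phi1 : R -> R) : Prop :=
  exists v, L2_H10 v /\
    exists phi, lagrangian_flow v phi /\
      forall x, 0 <= x <= 1 -> phi 0 x = phi0 x /\ phi 1 x = phi1 x.

(* Main.v *)
Require Import Defs.
From Stdlib Require Import Reals Lra List Classical ClassicalEpsilon FunctionalExtensionality.
From Coquelicot Require Import Coquelicot.
Open Scope R_scope.

Lemma choice_R (Q : R -> R -> Prop) :
  (forall c, exists d, Q c d) -> exists del : R -> R, forall c, Q c (del c).
Proof.
  intros H. exists (fun c => proj1_sig (constructive_indefinite_description _ (H c))).
  intros c. exact (proj2_sig (constructive_indefinite_description _ (H c))).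
Qed.

Lemma fine_div_le del a b l : fine_div del a b l -> a <= b.
Proof.
  revert a. induction l as [|[[u w] c] l IH]; simpl; intros a H.
  - lra.
  - destruct H as (-> & H1 & _ & _ & _ & _ & H2). specialize (IH _ H2). lra.
Qed.

Definition Bp (del : R -> R) (p a : R) := Rmax 0 (p + del p - Rmax a (p - del p)).
Definition Bsum del (P : list R) a := fold_right (fun p s => Bp del p a + s) 0 P.

Lemma Bp_nonneg del p a : 0 <= Bp del p a.
Proof. unfold Bp. apply Rmax_l. Qed.

Lemma Bp_mono del p a a' : a <= a' -> Bp del p a' <= Bp del p a.
Proof.
  intros H. unfold Bp.
  assert (Rmax a (p - del p) <= Rmax a' (p - del p)).
  { unfold Rmax; repeat destruct Rle_dec; lra. }
  unfold Rmax at 1 3; repeat destruct Rle_dec; lra.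
Qed.

Lemma Bp_tag del c a w : a <= c -> c <= w -> c - a < del c -> w - c < del c ->
  (w - a) + Bp del c w <= Bp del c a.
Proof.
  intros. unfold Bp. unfold Rmax; repeat destruct Rle_dec; lra.
Qed.

Lemma Bp_bound del p a : 0 < del p -> Bp del p a <= 2 * del p.
Proof. intros. unfold Bp, Rmax; repeat destruct Rle_dec; lra. Qed.

Lemma Bsum_nonneg del P a : 0 <= Bsum del P a.
Proof. induction P; simpl. lra. pose proof (Bp_nonneg del a0 a). lra. Qed.

Lemma Bsum_mono del P a a' : a <= a' -> Bsum del P a' <= Bsum del P a.
Proof. intros H. induction P; simpl. lra. pose proof (Bp_mono del a0 _ _ H). lra. Qed.

Lemma Bsum_tag del P c a w : In c P -> a <= c -> c <= w -> c - a < del c -> w - c < del c ->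
  (w - a) + Bsum del P w <= Bsum del P a.
Proof.
  intros Hin H1 H2 H3 H4. induction P as [|p P IH]; simpl in *.
  - contradiction.
  - destruct Hin as [-> | Hin].
    + pose proof (Bp_tag del c a w H1 H2 H3 H4).
      pose proof (Bsum_mono del P a w ltac:(lra)). lra.
    + specialize (IH Hin). pose proof (Bp_mono del p a w ltac:(lra)). lra.
Qed.

Lemma Bsum_bound del P a eta : (forall p, In p P -> 0 < del p <= eta) ->
  Bsum del P a <= INR (length P) * (2 * eta).
Proof.
  induction P as [|p P IH]; cbn [length fold_right Bsum]; intros H. simpl; lra.
  rewrite S_INR. destruct (H p (or_introl eq_refl)).
  pose proof (Bp_bound del p a ltac:(lra)).
  specialize (IH (fun q Hq => H q (or_intror Hq))). unfold Bsum in *; simpl fold_right. lra.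
Qed.

Lemma err_ind f F del P K e a0 b l :
  0 <= K -> 0 <= e ->
  (forall c u w, a0 <= u -> u <= c -> c <= w -> w <= b -> u < w ->
     c - u < del c -> w - c < del c ->
     (In c P -> Rabs (F w - F u - f c * (w - u)) <= (e + K) * (w - u)) /\
     (~ In c P -> Rabs (F w - F u - f c * (w - u)) <= e * (w - u))) ->
  forall a, a0 <= a -> fine_div del a b l ->
  Rabs (rsum f l - (F b - F a)) <= e * (b - a) + K * Bsum del P a.
Proof.
  intros HK He HE. induction l as [|[[u w] c] l IH]; simpl; intros a Ha Hf.
  - subst. pose proof (Bsum_nonneg del P b).
    replace (0 - (F b - F b)) with 0 by ring. rewrite Rabs_R0.
    assert (0 <= K * Bsum del P b) by (apply Rmult_le_pos; lra). lra.
  - destruct Hf as (<- & H1 & H2 & H3 & H4 & H5 & H6).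
    pose proof (fine_div_le _ _ _ _ H6) as Hwb.
    specialize (IH w ltac:(lra) H6).
    destruct (HE c u w ltac:(lra) H2 H3 Hwb H1 H4 H5) as [HE1 HE2].
    replace (f c * (w - u) + rsum f l - (F b - F u)) with
      (- (F w - F u - f c * (w - u)) + (rsum f l - (F b - F w))) by ring.
    eapply Rle_trans. apply Rabs_triang. rewrite Rabs_Ropp.
    destruct (classic (In c P)) as [Hin|Hin].
    + specialize (HE1 Hin).
      pose proof (Bsum_tag del P c u w Hin H2 H3 H4 H5).
      assert (K * ((w - u) + Bsum del P w) <= K * Bsum del P u) by (apply Rmult_le_compat_l; lra).
      nra.
    + specialize (HE2 Hin).
      pose proof (Bsum_mono del P u w ltac:(lra)).
      assert (K * Bsum del P w <= K * Bsum del P u) by (apply Rmult_le_compat_l; lra).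
      nra.
Qed.

Definition straddle (f F : R -> R) a b c (K : R) d :=
  forall u w, a <= u -> u <= c -> c <= w -> w <= b -> w - u < d ->
    Rabs (F w - F u - f c * (w - u)) <= K * (w - u).

Lemma HK_master f F a b (P : list R) K :
  a <= b -> 0 <= K ->
  (forall c, a <= c <= b -> ~ In c P -> forall eps, 0 < eps ->
     exists d, 0 < d /\ straddle f F a b c eps d) ->
  (forall c, a <= c <= b -> In c P -> exists d, 0 < d /\ straddle f F a b c K d) ->
  HK_int f a b (F b - F a).
Proof.
  intros Hab HK Hreg Hexc. split; [exact Hab|]. intros eps Heps.
  set (e := eps / (2 * (b - a + 1))).
  set (eta := eps / (4 * (K + 1) * (INR (length P) + 1))).
  assert (He : 0 < e) by (unfold e; apply Rdiv_lt_0_compat; lra).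
  assert (HL : 0 <= INR (length P)) by apply pos_INR.
  assert (Heta : 0 < eta) by (unfold eta; apply Rdiv_lt_0_compat; [lra|]; 
    apply Rmult_lt_0_compat; lra).
  destruct (choice_R (fun c d => 0 < d /\ (In c P -> d <= eta) /\
     forall u w, a <= u -> u <= c -> c <= w -> w <= b -> u < w ->
     c - u < d -> w - c < d ->
     (In c P -> Rabs (F w - F u - f c * (w - u)) <= (e + K) * (w - u)) /\
     (~ In c P -> Rabs (F w - F u - f c * (w - u)) <= e * (w - u)))) as [del Hdel].
  { intros c. destruct (Rle_dec a c) as [Hac|Hac]; [destruct (Rle_dec c b) as [Hcb|Hcb]|].
    - destruct (classic (In c P)) as [Hin|Hin].
      + destruct (Hexc c ltac:(lra) Hin) as (d & Hd & Hs).
        exists (Rmin (d/2) eta). split; [apply Rmin_glb_lt; lra|]. split.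
        { intros _. apply Rmin_r. }
        intros u w Hu Huc Hcw Hw Huw H1 H2. split; [|tauto]. intros _.
        pose proof (Rmin_l (d/2) eta).
        assert (Rabs (F w - F u - f c * (w - u)) <= K * (w - u)) by (apply Hs; lra).
        nra.
      + destruct (Hreg c ltac:(lra) Hin e He) as (d & Hd & Hs).
        exists (d/2). split; [lra|]. split; [tauto|].
        intros u w Hu Huc Hcw Hw Huw H1 H2. split; [tauto|]. intros _. apply Hs; lra.
    - exists (Rmin 1 eta). split; [apply Rmin_glb_lt; lra|]. split; [intros; apply Rmin_r|].
      intros. lra.
    - exists (Rmin 1 eta). split; [apply Rmin_glb_lt; lra|]. split; [intros; apply Rmin_r|].
      intros. lra. }
  exists del. split; [intros x; apply (proj1 (Hdel x))|].
  intros l Hl.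
  assert (H := err_ind f F del P K e a b l HK ltac:(lra)
     (fun c u w H1 H2 H3 H4 H5 H6 H7 => proj2 (proj2 (Hdel c)) u w H1 H2 H3 H4 H5 H6 H7) a (Rle_refl a) Hl).
  assert (HB := Bsum_bound del P a eta (fun p Hp => conj (proj1 (Hdel p)) (proj1 (proj2 (Hdel p)) Hp))).
  eapply Rle_lt_trans; [exact H|].
  assert (e * (b - a) < eps / 2).
  { unfold e. apply (Rmult_lt_reg_r (2 * (b - a + 1))); [lra|].
    field_simplify; lra. }
  assert (K * Bsum del P a <= K * (INR (length P) * (2 * eta))) by (apply Rmult_le_compat_l; lra).
  assert (K * (INR (length P) * (2 * eta)) < eps / 2).
  { unfold eta. 
    replace (K * (INR (length P) * (2 * (eps / (4 * (K + 1) * (INR (length P) + 1))))))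
      with ((eps / 2) * ((K / (K+1)) * (INR (length P) / (INR (length P) + 1)))) by (field; lra).
    assert (K / (K+1) < 1) by (apply (Rmult_lt_reg_r (K+1)); [lra|]; field_simplify; lra).
    assert (0 <= K / (K+1)) by (apply Rmult_le_pos; [lra|]; left; apply Rinv_0_lt_compat; lra).
    assert (INR (length P) / (INR (length P) + 1) < 1) by (apply (Rmult_lt_reg_r (INR (length P)+1)); [lra|]; field_simplify; lra).
    assert (0 <= INR (length P) / (INR (length P) + 1)) by (apply Rmult_le_pos; [lra|]; left; apply Rinv_0_lt_compat; lra).
    assert ((K / (K+1)) * (INR (length P) / (INR (length P) + 1)) < 1).
    { assert ((K / (K+1)) * (INR (length P) / (INR (length P) + 1)) <= K / (K+1) * 1) by
        (apply Rmult_le_compat_l; lra). lra. }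
    nra. }
  lra.
Qed.

Lemma deriv_bound H c l eps : is_derive H c l -> 0 < eps ->
  exists d, 0 < d /\ forall y, Rabs (y - c) < d -> Rabs (H y - H c - l * (y - c)) <= eps * Rabs (y - c).
Proof.
  intros Hd He. apply is_derive_Reals in Hd.
  destruct (Hd eps He) as [d Hd']. exists d. split; [apply cond_pos|].
  intros y Hy. destruct (Req_dec y c) as [->|Hyc].
  - replace (H c - H c - l * (c - c)) with 0 by ring. rewrite Rabs_R0. 
    apply Rmult_le_pos; [lra| apply Rabs_pos].
  - specialize (Hd' (y - c) ltac:(lra) Hy). replace (c + (y - c)) with y in Hd' by ring.
    assert (Hn : 0 < Rabs (y - c)) by (apply Rabs_pos_lt; lra).
    replace (H y - H c - l * (y - c)) with (((H y - H c) / (y - c) - l) * (y - c)) by (field; lra).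
    rewrite Rabs_mult. apply Rmult_le_compat_r; [apply Rabs_pos| lra].
Qed.

Lemma straddle_of_derive f F Hf a b c l d0 eps :
  is_derive Hf c l -> 0 < d0 -> 0 < eps -> f c = l ->
  (forall y, a <= y <= b -> Rabs (y - c) < d0 -> F y = Hf y) ->
  exists d, 0 < d /\ straddle f F a b c eps d.
Proof.
  intros Hd Hd0 He Hfc Heq.
  destruct (deriv_bound Hf c l eps Hd He) as (d & Hd1 & Hb).
  exists (Rmin d d0). split; [apply Rmin_glb_lt; lra|].
  intros u w Hu Huc Hcw Hw Hwu.
  pose proof (Rmin_l d d0). pose proof (Rmin_r d d0).
  assert (Hu' : Rabs (u - c) < d /\ Rabs (u - c) < d0) by (rewrite Rabs_left1; lra).
  assert (Hw' : Rabs (w - c) < d /\ Rabs (w - c) < d0) by (rewrite Rabs_right; lra).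
  rewrite (Heq u ltac:(lra) (proj2 Hu')), (Heq w ltac:(lra) (proj2 Hw')), Hfc.
  pose proof (Hb u (proj1 Hu')). pose proof (Hb w (proj1 Hw')).
  rewrite (Rabs_left1 (u - c)) in H1 by lra. rewrite (Rabs_right (w - c)) in H2 by lra.
  replace (Hf w - Hf u - l * (w - u)) with
    ((Hf w - Hf c - l * (w - c)) - (Hf u - Hf c - l * (u - c))) by ring.
  eapply Rle_trans; [apply Rabs_triang|]. rewrite Rabs_Ropp. nra.
Qed.

Lemma straddle_of_lip f F a b c L :
  (forall u w, a <= u -> u <= w -> w <= b -> Rabs (F w - F u) <= L * (w - u)) ->
  straddle f F a b c (L + Rabs (f c)) 1.
Proof.
  intros HL u w Hu Huc Hcw Hw _.
  specialize (HL u w Hu ltac:(lra) Hw).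
  eapply Rle_trans; [apply Rabs_triang|]. rewrite Rabs_Ropp, Rabs_mult, (Rabs_right (w - u)) by lra.
  lra.
Qed.

Definition pc (p1 p2 k1 k2 k3 y : R) : R :=
  if Rlt_dec y p1 then k1 else if Rle_dec y p2 then k2 else k3.
Definition PC (p1 p2 k1 k2 k3 y : R) : R :=
  k1 * Rmin y p1 + k2 * (Rmin (Rmax y p1) p2 - p1) + k3 * (Rmax y p2 - p2).

Lemma pc_map (h : R -> R) p1 p2 k1 k2 k3 y :
  h (pc p1 p2 k1 k2 k3 y) = pc p1 p2 (h k1) (h k2) (h k3) y.
Proof. unfold pc. repeat destruct Rlt_dec; repeat destruct Rle_dec; reflexivity. Qed.

Lemma PC_lip p1 p2 k1 k2 k3 u w : p1 <= p2 -> u <= w ->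
  Rabs (PC p1 p2 k1 k2 k3 w - PC p1 p2 k1 k2 k3 u) <= (Rabs k1 + Rabs k2 + Rabs k3) * (w - u).
Proof.
  intros Hp Huw. unfold PC.
  set (d1 := Rmin w p1 - Rmin u p1).
  set (d2 := Rmin (Rmax w p1) p2 - Rmin (Rmax u p1) p2).
  set (d3 := Rmax w p2 - Rmax u p2).
  assert (H1 : 0 <= d1 /\ d1 <= w - u) by (unfold d1, Rmin; repeat destruct Rle_dec; lra).
  assert (H2 : 0 <= d2 /\ d2 <= w - u) by (unfold d2, Rmin, Rmax; repeat destruct Rle_dec; lra).
  assert (H3 : 0 <= d3 /\ d3 <= w - u) by (unfold d3, Rmax; repeat destruct Rle_dec; lra).
  replace (k1 * Rmin w p1 + k2 * (Rmin (Rmax w p1) p2 - p1) + k3 * (Rmax w p2 - p2) -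
    (k1 * Rmin u p1 + k2 * (Rmin (Rmax u p1) p2 - p1) + k3 * (Rmax u p2 - p2)))
    with (k1 * d1 + k2 * d2 + k3 * d3) by (unfold d1, d2, d3; ring).
  eapply Rle_trans; [apply Rabs_triang|].
  eapply Rle_trans; [apply Rplus_le_compat_r; apply Rabs_triang|].
  rewrite !Rabs_mult, (Rabs_right d1), (Rabs_right d2), (Rabs_right d3) by lra.
  pose proof (Rabs_pos k1). pose proof (Rabs_pos k2). pose proof (Rabs_pos k3).
  nra.
Qed.

Lemma pc_HK p1 p2 k1 k2 k3 a b : p1 <= p2 -> a <= b ->
  HK_int (pc p1 p2 k1 k2 k3) a b (PC p1 p2 k1 k2 k3 b - PC p1 p2 k1 k2 k3 a).
Proof.
  intros Hp Hab.
  apply (HK_master _ _ a b (p1 :: p2 :: nil) ((Rabs k1 + Rabs k2 + Rabs k3) + (Rabs k1 + Rabs k2 + Rabs k3))); [lra| |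
    |].
  { pose proof (Rabs_pos k1). pose proof (Rabs_pos k2). pose proof (Rabs_pos k3). lra. }
  - intros c Hc Hin eps Heps.
    assert (c <> p1 /\ c <> p2) as [Hc1 Hc2] by (simpl in Hin; split; intros ->; tauto).
    destruct (Rlt_dec c p1) as [Hl1|Hl1].
    + apply (straddle_of_derive _ _ (fun y => k1 * y) a b c k1 (p1 - c)); try lra.
      * auto_derive; trivial; ring.
      * unfold pc; destruct Rlt_dec; tauto.
      * intros y Hy Hyc. apply Rabs_def2 in Hyc. unfold PC, Rmin, Rmax; repeat destruct Rle_dec; lra.
    + destruct (Rlt_dec c p2) as [Hl2|Hl2].
      * apply (straddle_of_derive _ _ (fun y => k1 * p1 + k2 * (y - p1)) a b c k2 (Rmin (c - p1) (p2 - c))); try lra.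
        -- auto_derive; trivial; ring.
        -- apply Rmin_glb_lt; lra.
        -- unfold pc; destruct Rlt_dec; [tauto|]; destruct Rle_dec; [reflexivity|lra].
        -- intros y Hy Hyc. apply Rabs_def2 in Hyc. pose proof (Rmin_l (c - p1) (p2 - c)).
           pose proof (Rmin_r (c - p1) (p2 - c)).
           unfold PC, Rmin at 1 2, Rmax; repeat destruct Rle_dec; lra.
      * apply (straddle_of_derive _ _ (fun y => k1 * p1 + k2 * (p2 - p1) + k3 * (y - p2)) a b c k3 (c - p2)); try lra.
        -- auto_derive; trivial; ring.
        -- unfold pc; destruct Rlt_dec; [tauto|]; destruct Rle_dec; [lra|reflexivity].
        -- intros y Hy Hyc. apply Rabs_def2 in Hyc. unfold PC, Rmin, Rmax; repeat destruct Rle_dec; lra.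
  - intros c Hc Hin. exists 1. split; [lra|].
    intros u w Hu Huc Hcw Hw Hd.
    assert (Rabs (pc p1 p2 k1 k2 k3 c) <= Rabs k1 + Rabs k2 + Rabs k3).
    { pose proof (Rabs_pos k1). pose proof (Rabs_pos k2). pose proof (Rabs_pos k3).
      unfold pc; repeat destruct Rlt_dec; repeat destruct Rle_dec; lra. }
    eapply Rle_trans. apply (straddle_of_lip _ _ a b c (Rabs k1 + Rabs k2 + Rabs k3)); auto; try lra.
    { intros; apply PC_lip; lra. }
    nra.
Qed.

Lemma pc_L_int p1 p2 k1 k2 k3 a b : p1 <= p2 -> a <= b ->
  L_int (pc p1 p2 k1 k2 k3) a b (PC p1 p2 k1 k2 k3 b - PC p1 p2 k1 k2 k3 a).
Proof.
  intros. split. apply pc_HK; auto.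
  eexists. 
  assert (E : (fun x => Rabs (pc p1 p2 k1 k2 k3 x)) = pc p1 p2 (Rabs k1) (Rabs k2) (Rabs k3)).
  { apply functional_extensionality; intros; apply (pc_map Rabs). }
  rewrite E. apply pc_HK; auto.
Qed.

Lemma pc_L_integrable (h : R -> R) p1 p2 k1 k2 k3 a b : p1 <= p2 -> a <= b ->
  L_integrable (fun x => h (pc p1 p2 k1 k2 k3 x)) a b.
Proof.
  intros. assert (E : (fun x => h (pc p1 p2 k1 k2 k3 x)) = pc p1 p2 (h k1) (h k2) (h k3)).
  { apply functional_extensionality; intros; apply pc_map. }
  rewrite E. eexists. apply pc_L_int; auto.
Qed.

Lemma pc_L2 p1 p2 k1 k2 k3 a b : p1 <= p2 -> a <= b -> L2 (pc p1 p2 k1 k2 k3) a b.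
Proof.
  intros. split.
  - intros M HM. apply (pc_L_integrable (fun z => Rmax (-M) (Rmin M z))); auto.
  - apply (pc_L_integrable (fun z => z ^ 2)); auto.
Qed.

Lemma lip_continuous (g : R -> R) L x : 0 < L ->
  (forall y, Rabs (g y - g x) <= L * Rabs (y - x)) -> continuous g x.
Proof.
  intros HL Hg. apply continuity_pt_filterlim. intros eps Heps.
  exists (eps / L). split. { apply Rdiv_lt_0_compat; lra. }
  intros y [_ Hy]. simpl in *. unfold R_dist in *.
  eapply Rle_lt_trans. apply Hg.
  apply (Rmult_lt_compat_l L) in Hy; [|lra]. field_simplify in Hy; lra.
Qed.

Lemma RInt_pt0 (g : R -> R) a : @eq R (RInt g a a) 0.
Proof. apply (RInt_point a g). Qed.

Definition clamp a b y := Rmax a (Rmin b y).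

Lemma clamp_continuous a b x : continuous (clamp a b) x.
Proof.
  apply (lip_continuous _ 1); [lra|]. intros y. unfold clamp, Rmax, Rmin.
  repeat destruct Rle_dec; unfold Rabs; repeat destruct Rcase_abs; lra.
Qed.

Lemma clamp_id a b y : a <= y <= b -> clamp a b y = y.
Proof. intros. unfold clamp, Rmax, Rmin; repeat destruct Rle_dec; lra. Qed.

Lemma clamp_in a b y : a <= b -> a <= clamp a b y <= b.
Proof. intros. unfold clamp, Rmax, Rmin; repeat destruct Rle_dec; lra. Qed.

Lemma RInt_derive_all (g : R -> R) a c : (forall y, continuous g y) ->
  is_derive (fun y => RInt g a y) c (g c).
Proof.
  intros Hc. apply (is_derive_RInt g (fun y => RInt g a y) a c); [|apply Hc].
  apply filter_forall. intros y. apply (RInt_correct g a y). apply ex_RInt_continuous. intros; apply Hc.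
Qed.

Lemma cont_HK_exc (f g : R -> R) (a b : R) (P : list R) (M : R) : a <= b -> 0 <= M -> (forall y, continuous g y) ->
  (forall y, Rabs (g y) <= M) ->
  (forall c, a <= c <= b -> ~ In c P -> f c = g c) ->
  (forall c, a <= c <= b -> In c P -> Rabs (f c) <= M) ->
  HK_int f a b (RInt g a b).
Proof.
  intros Hab HM Hc Hb Hfg Hexc.
  pose (F := fun y => RInt g a y).
  assert (E : @eq R (RInt g a b) (F b - F a)) by (unfold F; rewrite RInt_pt0; unfold Rminus; rewrite Ropp_0, Rplus_0_r; reflexivity).
  rewrite E. apply (HK_master f F a b P (M + M)); auto; try lra.
  - intros c Hc' Hin eps Heps.
    apply (straddle_of_derive f F F a b c (g c) 1); auto; try lra.
    apply RInt_derive_all; auto.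
  - intros c Hc' Hin. exists 1. split; [lra|]. intros u w Hu Huc Hcw Hw Hd.
    eapply Rle_trans. apply (straddle_of_lip f F a b c M); auto; try lra.
    + intros u' w' Hu' Huw' Hw'.
      assert (ex_RInt g a u') by (apply (@ex_RInt_continuous R_CompleteNormedModule); intros; apply Hc).
      assert (ex_RInt g u' w') by (apply (@ex_RInt_continuous R_CompleteNormedModule); intros; apply Hc).
      pose proof (RInt_Chasles g a u' w' H H0). unfold F. rewrite <- H1.
      assert (H3 : forall x y : R, plus x y - x = y) by (intros; unfold plus; simpl; ring).
      rewrite H3.
      rewrite Rmult_comm. apply abs_RInt_le_const; auto.
    + specialize (Hexc c Hc' Hin). nra.
Qed.

Lemma cont_HK (f : R -> R) (a b : R) : a <= b -> (forall c, a <= c <= b -> continuous f c) ->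
  HK_int f a b (RInt (fun y => f (clamp a b y)) a b).
Proof.
  intros Hab Hc.
  set (g := fun y => f (clamp a b y)).
  assert (Hg : forall y, continuous g y).
  { intros y. unfold g. apply continuous_comp. apply clamp_continuous.
    apply Hc. apply clamp_in; auto. }
  pose (F := fun y => RInt g a y).
  assert (E : @eq R (RInt g a b) (F b - F a)) by (unfold F; rewrite RInt_pt0; unfold Rminus; rewrite Ropp_0, Rplus_0_r; reflexivity).
  fold g. rewrite E. apply (HK_master f F a b nil 0); auto; try lra.
  - intros c Hc' Hin eps Heps.
    apply (straddle_of_derive f F F a b c (g c) 1); auto; try lra.
    + apply RInt_derive_all; auto.
    + unfold g. rewrite clamp_id; auto.
  - intros c _ [].
Qed.

Lemma cont_L_integrable (f : R -> R) (a b : R) : a <= b -> (forall c, a <= c <= b -> continuous f c) ->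
  L_integrable f a b.
Proof.
  intros Hab Hc. eexists. split. apply cont_HK; auto.
  eexists. apply cont_HK; auto. intros c Hc'. apply continuous_Rabs_comp. auto.
Qed.

Lemma trunc_continuous (f : R -> R) (M c : R) : continuous f c ->
  continuous (fun x => Rmax (- M) (Rmin M (f x))) c.
Proof.
  intros H. apply (continuous_comp f (fun z => Rmax (-M) (Rmin M z))); auto.
  apply (clamp_continuous (-M) M).
Qed.

Lemma cont_L_measurable (f : R -> R) (a b : R) : a <= b -> (forall c, a <= c <= b -> continuous f c) ->
  L_measurable f a b.
Proof.
  intros Hab Hc M HM. apply cont_L_integrable; auto. intros; apply trunc_continuous; auto.
Qed.

Definition aE (e : R) := 1 - e ^ 2.
Definition GE (e : R) := aE e ^ 2 / 2.
Definition c1E (e : R) := 8 * e / aE e.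
Definition c2E (e : R) := -8 * aE e / (e * (1 + aE e)).
Definition vE (e y : R) := PC (GE e) (1 - GE e) (c1E e) (c2E e) (c1E e) y.

Lemma aE_range e : -1 <= e <= 1 -> 0 <= aE e <= 1.
Proof. intros. unfold aE. nra. Qed.

Lemma GE_range e : -1 <= e <= 1 -> 0 <= GE e <= 1/2.
Proof. intros H. pose proof (aE_range e H). unfold GE. nra. Qed.

Lemma one_m2G e : 1 - 2 * GE e = e ^ 2 * (1 + aE e).
Proof. unfold GE, aE. field. Qed.

Lemma c1G e : c1E e * GE e = 4 * e * aE e.
Proof.
  unfold c1E, GE. destruct (Req_dec (aE e) 0) as [H|H].
  - rewrite H. unfold Rdiv. rewrite Rinv_0. ring.
  - field. auto.
Qed.

Lemma c2L e : -1 <= e <= 1 -> c2E e * (e ^ 2 * (1 + aE e)) = -8 * aE e * e.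
Proof.
  intros He. pose proof (aE_range e He) as Ha.
  unfold c2E. destruct (Req_dec e 0) as [H|H].
  - subst e. replace (0 * (1 + aE 0)) with 0 by ring. unfold Rdiv. rewrite Rinv_0. ring.
  - field. split; [lra|auto].
Qed.

Lemma vE_traj e al : -1 <= e <= 1 -> 0 <= al <= 1 ->
  vE e (1/2 + (al - 1/2) * (1 - aE e ^ 2)) = (al - 1/2) * (-8 * aE e * e).
Proof.
  intros He Hal. pose proof (GE_range e He). pose proof (one_m2G e).
  assert (HL : 1 - aE e ^ 2 = 1 - 2 * GE e) by (unfold GE; field).
  rewrite HL. unfold vE, PC.
  assert (E2 : 0 <= 1 - 2 * GE e) by lra.
  set (y := 1 / 2 + (al - 1 / 2) * (1 - 2 * GE e)).
  assert (Hy1 : GE e <= y) by (unfold y; nra).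
  assert (Hy2 : y <= 1 - GE e) by (unfold y; nra).
  rewrite (Rmin_right y) by lra. rewrite (Rmax_left y) by lra. rewrite Rmin_left by lra.
  rewrite (Rmax_right y) by lra.
  assert (Hyg : y - GE e = al * (1 - 2 * GE e)) by (unfold y; field). rewrite Hyg. rewrite H0.
  replace (c1E e * GE e + c2E e * (al * (e ^ 2 * (1 + aE e))) + c1E e * ((1 - GE e) - (1 - GE e)))
    with (c1E e * GE e + al * (c2E e * (e ^ 2 * (1 + aE e)))) by ring.
  rewrite c1G, c2L by auto. field.
Qed.

Lemma vE_0 e : -1 <= e <= 1 -> vE e 0 = 0.
Proof.
  intros He. pose proof (GE_range e He). unfold vE, PC.
  rewrite Rmin_left, Rmax_right, Rmin_left, Rmax_right by lra. ring.
Qed.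

Lemma vE_1 e : -1 <= e <= 1 -> vE e 1 = 0.
Proof.
  intros He. pose proof (GE_range e He). unfold vE, PC.
  rewrite Rmin_right, Rmax_left, Rmin_right, Rmax_left by lra.
  replace (c1E e * GE e + c2E e * (1 - GE e - GE e) + c1E e * (1 - (1 - GE e)))
    with (2 * (c1E e * GE e) + c2E e * (1 - 2 * GE e)) by ring.
  rewrite one_m2G, c1G, c2L by auto. ring.
Qed.

Definition Rmx (p q : R) := (p + q + Rabs (p - q)) / 2.
Lemma Rmx_max p q : Rmx p q = Rmax p q.
Proof. unfold Rmx, Rmax. destruct Rle_dec; unfold Rabs; destruct Rcase_abs; lra. Qed.

Definition Vc (e z : R) :=
  4 * e * aE e * z * (1 - Rabs z) /
  Rmx (e ^ 2 * (1 + aE e) * (1 - Rabs z)) (aE e ^ 2 * Rabs z).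

Lemma vE_Vc e y : -1 <= e <= 1 -> 0 <= y <= 1 -> vE e y = Vc e (1 - 2 * y).
Proof.
  intros He Hy. pose proof (GE_range e He). pose proof (aE_range e He).
  unfold Vc. rewrite Rmx_max.
  destruct (Req_dec e 0) as [He0|He0].
  - subst e. unfold vE, c1E, c2E. replace (0 * (1 + aE 0)) with 0 by ring.
    unfold Rdiv. rewrite Rinv_0. unfold PC. ring.
  - destruct (Req_dec (aE e) 0) as [Ha|Ha].
    + unfold vE, c1E, c2E. rewrite Ha. unfold Rdiv. rewrite Rinv_0. unfold PC. ring.
    + assert (Hea : e ^ 2 = 1 - aE e) by (unfold aE; ring).
      assert (Ha' : 0 < aE e < 1) by (split; [lra|]; unfold aE in *; nra).
      assert (He2 : 0 < e ^ 2) by (simpl; rewrite Rmult_1_r; apply Rsqr_pos_lt; exact He0).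
      assert (Ha2 : 0 <= aE e ^ 2 <= aE e) by (split; nra).
      unfold vE, PC, GE, c1E, c2E.
      destruct (Rlt_dec y (aE e ^ 2 / 2)) as [Hy1|Hy1];
      [|destruct (Rle_dec y (1 - aE e ^ 2 / 2)) as [Hy2|Hy2]].
      *
        rewrite Rmin_left, Rmax_right, Rmin_left, Rmax_right by lra.
        assert (Hz : 0 < 1 - 2 * y) by nra. rewrite Rabs_right by lra.
        rewrite Rmax_right.
        2:{ rewrite Hea. nra. }
        field. repeat split; try lra.
      * rewrite Rmin_right, Rmax_left, Rmin_left, Rmax_right by lra.
        rewrite Rmax_left.
        2:{ assert (Rabs (1 - 2 * y) <= 1 - aE e ^ 2) by (apply Rabs_le; nra).
            pose proof (Rabs_pos (1 - 2*y)). rewrite Hea. nra. }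
        assert (Rabs (1 - 2 * y) <= 1 - aE e ^ 2) by (apply Rabs_le; nra).
        assert (0 < 1 - Rabs (1 - 2 * y)) by nra.
        assert (E1 : 4 * e * aE e * (1 - 2 * y) * (1 - Rabs (1 - 2 * y)) /
           (e ^ 2 * (1 + aE e) * (1 - Rabs (1 - 2 * y))) = 4 * aE e * (1 - 2 * y) / (e * (1 + aE e))).
        { field. repeat split; lra. }
        rewrite E1. unfold aE in *. field. repeat split; lra.
      * rewrite Rmin_right, Rmax_left, Rmin_right, Rmax_left by lra.
        assert (Hz : 1 - 2 * y < 0) by nra. rewrite Rabs_left by lra.
        rewrite Rmax_right.
        2:{ rewrite Hea. nra. }
        unfold aE in *. field. repeat split; lra.
Qed.

Lemma cont_poly (f : R -> R) x : ex_derive f x -> continuous f x.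
Proof. apply (@ex_derive_continuous R_AbsRing R_NormedModule). Qed.

Lemma Rmx_pos p q : 0 <= p -> 0 <= q -> (0 < p \/ 0 < q) -> 0 < Rmx p q.
Proof. intros. rewrite Rmx_max. unfold Rmax; destruct Rle_dec; lra. Qed.

Lemma Vc_cont z e : 0 < Rabs z < 1 -> -1 <= e <= 1 -> continuous (fun e => Vc e z) e.
Proof.
  intros Hz He. unfold Vc.
  set (r := Rabs z) in *.
  assert (Hden : Rmx (e ^ 2 * (1 + aE e) * (1 - r)) (aE e ^ 2 * r) <> 0).
  { pose proof (aE_range e He). apply Rgt_not_eq. apply Rmx_pos.
    - apply Rmult_le_pos; [|lra]. apply Rmult_le_pos; nra.
    - nra.
    - destruct (Req_dec e 0) as [->|Hne].
      + right. unfold aE. simpl. nra.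
      + left. apply Rmult_lt_0_compat; [|lra]. apply Rmult_lt_0_compat; [|lra].
        simpl. rewrite Rmult_1_r. apply Rsqr_pos_lt; auto. }
  apply (continuous_mult (fun e => 4 * e * aE e * z * (1 - r))
          (fun e => / Rmx (e ^ 2 * (1 + aE e) * (1 - r)) (aE e ^ 2 * r))).
  - apply cont_poly. unfold aE. auto_derive. trivial.
  - apply continuous_Rinv_comp; auto. unfold Rmx.
    apply (continuous_mult (fun e => e ^ 2 * (1 + aE e) * (1 - r) + aE e ^ 2 * r +
        Rabs (e ^ 2 * (1 + aE e) * (1 - r) - aE e ^ 2 * r)) (fun _ => / 2)).
    + apply (continuous_plus (fun e => e ^ 2 * (1 + aE e) * (1 - r) + aE e ^ 2 * r)
         (fun e => Rabs (e ^ 2 * (1 + aE e) * (1 - r) - aE e ^ 2 * r))).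
      * apply cont_poly. unfold aE. auto_derive. trivial.
      * apply continuous_Rabs_comp. apply cont_poly. unfold aE. auto_derive. trivial.
    + apply continuous_const.
Qed.

Lemma Vc_zero z e : (z = 0 \/ Rabs z = 1) -> Vc e z = 0.
Proof.
  intros [->| H]; unfold Vc.
  - unfold Rdiv. ring.
  - rewrite H. unfold Rdiv. ring.
Qed.

Definition ec (t : R) := clamp (-1) 1 (1 - 2 * t).

Lemma ec_range t : -1 <= ec t <= 1.
Proof. apply clamp_in. lra. Qed.

Lemma ec_cont t : continuous ec t.
Proof.
  unfold ec. apply (continuous_comp (fun t => 1 - 2 * t) (clamp (-1) 1)).
  - apply cont_poly. auto_derive. trivial.
  - apply clamp_continuous.
Qed.

Lemma ec_id t : 0 <= t <= 1 -> ec t = 1 - 2 * t.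
Proof. intros. unfold ec. apply clamp_id. lra. Qed.

Definition vfun (t y : R) := vE (ec t) y.
Definition gfun (t : R) := pc (GE (ec t)) (1 - GE (ec t)) (c1E (ec t)) (c2E (ec t)) (c1E (ec t)).
Definition nfun (t : R) :=
  PC (GE (ec t)) (1 - GE (ec t)) (c1E (ec t) ^ 2) (c2E (ec t) ^ 2) (c1E (ec t) ^ 2) 1.

Lemma vfun_cont x t : 0 <= x <= 1 -> continuous (fun t => vfun t x) t.
Proof.
  intros Hx.
  assert (E : (fun t => vfun t x) = (fun t => Vc (ec t) (1 - 2 * x))).
  { apply functional_extensionality. intros s. unfold vfun. apply vE_Vc; auto. apply ec_range. }
  apply (continuous_ext (fun t => Vc (ec t) (1 - 2 * x))).
  { intros s. unfold vfun. symmetry. apply vE_Vc; auto. apply ec_range. }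
  clear E.
  destruct (classic (0 < Rabs (1 - 2 * x) < 1)) as [Hz|Hz].
  - apply (continuous_comp ec (fun e => Vc e (1 - 2 * x))). apply ec_cont.
    apply Vc_cont; auto. apply ec_range.
  - assert (E2 : (fun t => Vc (ec t) (1 - 2 * x)) = (fun _ => 0)).
    { apply functional_extensionality. intros s. apply Vc_zero.
      pose proof (Rabs_pos (1 - 2 * x)).
      assert (Rabs (1 - 2 * x) <= 1) by (apply Rabs_le; lra).
      destruct (Req_dec (1 - 2 * x) 0); [left; auto|right].
      pose proof (Rabs_pos_lt (1 - 2*x) H1). lra. }
    apply (continuous_ext (fun _ => 0)). { intros s. exact (f_equal (fun h => h s) (eq_sym E2)). }
    apply continuous_const.
Qed.

Lemma vfun_meas x : 0 <= x <= 1 -> L_measurable (fun t => vfun t x) 0 1.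
Proof. intros. apply cont_L_measurable; [lra|]. intros; apply vfun_cont; auto. Qed.

Lemma gfun_int t x : 0 <= x <= 1 -> L_int (gfun t) 0 x (vfun t x).
Proof.
  intros Hx. pose proof (GE_range (ec t) (ec_range t)).
  replace (vfun t x) with (vfun t x - vfun t 0).
  2:{ unfold vfun. rewrite vE_0 by apply ec_range. ring. }
  apply pc_L_int; lra.
Qed.

Lemma gfun_L2 t : L2 (gfun t) 0 1.
Proof. pose proof (GE_range (ec t) (ec_range t)). apply pc_L2; lra. Qed.

Lemma nfun_int t : L_int (fun y => gfun t y ^ 2) 0 1 (nfun t).
Proof.
  pose proof (GE_range (ec t) (ec_range t)).
  assert (E : (fun y => gfun t y ^ 2) = pc (GE (ec t)) (1 - GE (ec t)) (c1E (ec t) ^ 2) (c2E (ec t) ^ 2) (c1E (ec t) ^ 2)).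
  { apply functional_extensionality; intros y. unfold gfun. apply (pc_map (fun z => z ^ 2)). }
  rewrite E. replace (nfun t) with (nfun t - PC (GE (ec t)) (1 - GE (ec t)) (c1E (ec t) ^ 2) (c2E (ec t) ^ 2) (c1E (ec t) ^ 2) 0).
  - apply pc_L_int; lra.
  - unfold PC. rewrite Rmin_left, Rmax_right, Rmin_left, Rmax_right by lra. ring.
Qed.

Definition gN (t : R) := 64 / (1 + aE (ec t)).

Lemma gN_cont t : continuous gN t.
Proof.
  unfold gN. apply (continuous_comp ec (fun e => 64 / (1 + aE e))). apply ec_cont.
  apply cont_poly. pose proof (ec_range t). pose proof (aE_range _ H). unfold aE in *.
  auto_derive. lra.
Qed.

Lemma gN_bound t : Rabs (gN t) <= 64.
Proof.
  unfold gN. pose proof (aE_range _ (ec_range t)).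
  rewrite Rabs_right.
  - apply (Rmult_le_reg_r (1 + aE (ec t))); [lra|]. field_simplify; nra.
  - left. apply Rdiv_lt_0_compat; lra.
Qed.

Lemma nfun_E t : nfun t = 2 * (c1E (ec t) ^ 2 * GE (ec t)) + c2E (ec t) ^ 2 * (1 - 2 * GE (ec t)).
Proof.
  pose proof (GE_range (ec t) (ec_range t)). unfold nfun, PC.
  rewrite Rmin_right, Rmax_left, Rmin_right, Rmax_left by lra. ring.
Qed.

Lemma nfun_reg t : 0 <= t <= 1 -> ~ In t (0 :: 1/2 :: 1 :: nil) -> nfun t = gN t.
Proof.
  intros Ht Hin. simpl in Hin.
  assert (t <> 0 /\ t <> 1/2 /\ t <> 1) as (H1 & H2 & H3) by (repeat split; intros ->; tauto).
  rewrite nfun_E. unfold gN. rewrite ec_id by auto.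
  assert (He : 1 - 2 * t <> 0) by lra.
  assert (Ha : aE (1 - 2 * t) <> 0).
  { unfold aE. intros E. assert ((1 - 2*t) ^ 2 < 1). 
    { assert (0 < t < 1) by lra. nra. } lra. }
  assert (Ha1 : 1 + aE (1 - 2*t) <> 0).
  { assert (0 <= aE (1-2*t)) by (unfold aE; nra). lra. }
  unfold c1E, c2E, GE. set (e := 1 - 2 * t) in *. unfold aE in *. field.
  repeat split; auto.
Qed.

Lemma nfun_exc t : In t (0 :: 1/2 :: 1 :: nil) -> nfun t = 0.
Proof.
  intros Hin. rewrite nfun_E. simpl in Hin.
  destruct Hin as [<-|[<-|[<-|[]]]]; rewrite ec_id by lra.
  - unfold c1E, c2E, GE, aE. replace (1 - (1 - 2 * 0) ^ 2) with 0 by ring.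
    unfold Rdiv. rewrite Rinv_0. ring.
  - unfold c1E, c2E, GE, aE. replace (1 - 2 * (1/2)) with 0 by field.
    replace (0 * (1 + (1 - 0 ^ 2))) with 0 by ring. unfold Rdiv. rewrite Rinv_0. ring.
  - unfold c1E, c2E, GE, aE. replace (1 - (1 - 2 * 1) ^ 2) with 0 by ring.
    unfold Rdiv. rewrite Rinv_0. ring.
Qed.

Lemma nfun_integrable : L_integrable nfun 0 1.
Proof.
  exists (RInt gN 0 1). split.
  - apply (cont_HK_exc nfun gN 0 1 (0 :: 1/2 :: 1 :: nil) 64); try lra.
    + apply gN_cont.
    + apply gN_bound.
    + intros; apply nfun_reg; auto.
    + intros c _ Hin. rewrite nfun_exc by auto. rewrite Rabs_R0. lra.
  - exists (RInt gN 0 1).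
    apply (cont_HK_exc _ gN 0 1 (0 :: 1/2 :: 1 :: nil) 64); try lra.
    + apply gN_cont.
    + apply gN_bound.
    + intros. rewrite nfun_reg by auto. apply Rabs_right. left. unfold gN.
      pose proof (aE_range _ (ec_range c)). apply Rdiv_lt_0_compat; lra.
    + intros c _ Hin. rewrite nfun_exc by auto. rewrite Rabs_R0, Rabs_R0. lra.
Qed.

Definition Lam (t : R) := 1 - aE (ec t) ^ 2.

Lemma Lam_range t : 0 <= Lam t <= 1.
Proof. unfold Lam. pose proof (aE_range _ (ec_range t)). nra. Qed.

Lemma Lam_lip u w : 0 <= u -> u <= w -> w <= 1 -> Rabs (Lam w - Lam u) <= 8 * (w - u).
Proof.
  intros. unfold Lam, aE. rewrite !ec_id by lra.
  replace (1 - (1 - (1 - 2 * w) ^ 2) ^ 2 - (1 - (1 - (1 - 2 * u) ^ 2) ^ 2))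
    with ((4 * (u - w)) * ((1 - u - w) * (2 - (1 - 2*w)^2 - (1 - 2*u)^2))) by ring.
  rewrite Rabs_mult. rewrite (Rabs_left1 (4 * (u - w))) by lra.
  assert (Rabs ((1 - u - w) * (2 - (1 - 2 * w) ^ 2 - (1 - 2 * u) ^ 2)) <= 2).
  { rewrite Rabs_mult.
    assert (Rabs (1 - u - w) <= 1) by (apply Rabs_le; lra).
    assert (0 <= w * (1 - w)) by (apply Rmult_le_pos; lra).
    assert (0 <= u * (1 - u)) by (apply Rmult_le_pos; lra).
    assert (0 <= (1 - 2 * w) ^ 2 <= 1).
    { replace ((1 - 2 * w) ^ 2) with (1 - 4 * (w * (1 - w))) by ring.
      assert (Ew : w * (1 - w) = 1/4 - (w - 1/2) ^ 2) by field.
      pose proof (pow2_ge_0 (w - 1/2)). lra. }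
    assert (0 <= (1 - 2 * u) ^ 2 <= 1).
    { replace ((1 - 2 * u) ^ 2) with (1 - 4 * (u * (1 - u))) by ring.
      assert (Eu : u * (1 - u) = 1/4 - (u - 1/2) ^ 2) by field.
      pose proof (pow2_ge_0 (u - 1/2)). lra. }
    assert (Rabs (2 - (1 - 2 * w) ^ 2 - (1 - 2 * u) ^ 2) <= 2) by (apply Rabs_le; split; lra).
    pose proof (Rabs_pos (1 - u - w)). pose proof (Rabs_pos (2 - (1 - 2 * w) ^ 2 - (1 - 2 * u) ^ 2)).
    nra. }
  nra.
Qed.

Lemma Lam_half : Lam (1/2) = 0.
Proof. unfold Lam, aE. rewrite ec_id by lra. field. Qed.

Definition Fb (b0 b1 r : R) := (if Rle_dec r (1/2) then b0 else b1) * Lam r.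

Lemma Fb_lip b0 b1 u w : 0 <= u -> u <= w -> w <= 1 ->
  Rabs (Fb b0 b1 w - Fb b0 b1 u) <= (8 * (Rabs b0 + Rabs b1)) * (w - u).
Proof.
  intros Hu Huw Hw. pose proof (Rabs_pos b0). pose proof (Rabs_pos b1).
  unfold Fb. destruct (Rle_dec w (1/2)); destruct (Rle_dec u (1/2)); try lra.
  - rewrite <- Rmult_minus_distr_l, Rabs_mult. pose proof (Lam_lip u w Hu Huw Hw). nra.
  - pose proof (Lam_lip u (1/2) Hu ltac:(lra) ltac:(lra)).
    pose proof (Lam_lip (1/2) w ltac:(lra) ltac:(lra) Hw). rewrite Lam_half in *.
    rewrite Rminus_0_r in *. rewrite Rminus_0_l, Rabs_Ropp in *.
    pose proof (Lam_range u). pose proof (Lam_range w).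
    rewrite Rabs_right in H1 by lra. rewrite Rabs_right in H2 by lra.
    eapply Rle_trans. unfold Rminus. apply Rabs_triang. rewrite Rabs_Ropp, !Rabs_mult.
    rewrite (Rabs_right (Lam w)), (Rabs_right (Lam u)) by lra. nra.
  - rewrite <- Rmult_minus_distr_l, Rabs_mult. pose proof (Lam_lip u w Hu Huw Hw). nra.
Qed.

Lemma flow_HK b0 b1 (f : R -> R) s t : 0 <= s -> s < t -> t <= 1 ->
  (forall r, s <= r <= t -> f r = (if Rle_dec r (1/2) then b0 else b1) * (-8 * aE (ec r) * ec r)) ->
  HK_int f s t (Fb b0 b1 t - Fb b0 b1 s).
Proof.
  intros Hs Hst Ht Hf.
  apply (HK_master f (Fb b0 b1) s t (1/2 :: nil) (8 * (Rabs b0 + Rabs b1) + 0)); try lra.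
  { pose proof (Rabs_pos b0). pose proof (Rabs_pos b1). lra. }
  - intros c Hc Hin eps Heps.
    assert (Hc2 : c <> 1/2) by (intros ->; apply Hin; left; reflexivity).
    set (b := if Rle_dec c (1/2) then b0 else b1).
    apply (straddle_of_derive f (Fb b0 b1) (fun r => b * (1 - (1 - (1 - 2 * r) ^ 2) ^ 2)) s t c
       (b * (-8 * (1 - (1 - 2 * c) ^ 2) * (1 - 2 * c))) (Rabs (c - 1/2))); auto.
    + auto_derive; trivial. ring.
    + apply Rabs_pos_lt. lra.
    + rewrite Hf by lra. rewrite ec_id by lra. unfold b, aE. reflexivity.
    + intros y Hy Hyc. unfold Fb, Lam, aE. rewrite ec_id by lra. unfold b.
      apply Rabs_def2 in Hyc.
      destruct (Rle_dec c (1/2)); destruct (Rle_dec y (1/2)); try reflexivity;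
      unfold Rabs in Hyc; destruct Rcase_abs in Hyc; lra.
  - intros c Hc Hin. exists 1. split; [lra|].
    simpl in Hin. destruct Hin as [<-|[]].
    intros u w Hu Huc Hcw Hw Hd.
    eapply Rle_trans. apply (straddle_of_lip f (Fb b0 b1) s t (1/2) (8 * (Rabs b0 + Rabs b1))); auto; try lra.
    + intros; apply Fb_lip; lra.
    + rewrite Hf by lra. rewrite ec_id by lra. replace (1 - 2 * (1/2)) with 0 by field.
      rewrite Rmult_0_r, Rmult_0_r, Rabs_R0. lra.
Qed.

Lemma lip_sum (f : R -> R) a b L l : 0 <= L ->
  (forall u w, a <= u -> u <= w -> w <= b -> Rabs (f w - f u) <= L * (w - u)) ->
  List.Forall (fun p : R * R => a <= Datatypes.fst p /\ Datatypes.snd p <= b) l -> ordered_intervals l ->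
  0 <= fold_right (fun p s => (snd p - fst p) + s) 0 l /\
  fold_right (fun p s => Rabs (f (snd p) - f (fst p)) + s) 0 l <=
  L * fold_right (fun p s => (snd p - fst p) + s) 0 l.
Proof.
  intros HL Hf. induction l as [|p l IH]; simpl; intros Hl Ho. lra.
  inversion Hl; subst. destruct Ho as (Ho1 & _ & Ho3). destruct (IH H2 Ho3).
  specialize (Hf (fst p) (snd p) ltac:(tauto) Ho1 ltac:(tauto)). nra.
Qed.

Lemma lip_abs_cont (f : R -> R) a b L : 0 <= L ->
  (forall u w, a <= u -> u <= w -> w <= b -> Rabs (f w - f u) <= L * (w - u)) ->
  abs_cont f a b.
Proof.
  intros HL Hf eps Heps. exists (eps / (L + 1)). split; [apply Rdiv_lt_0_compat; lra|].
  intros l Hl Ho Hs.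
  destruct (lip_sum f a b L l HL Hf Hl Ho) as [H1 H2].
  assert (L * fold_right (fun p s => (snd p - fst p) + s) 0 l <= (L + 1) * fold_right (fun p s => (snd p - fst p) + s) 0 l) by nra.
  assert ((L + 1) * fold_right (fun p s => (snd p - fst p) + s) 0 l < (L+1) * (eps / (L + 1))) by
    (apply Rmult_lt_compat_l; lra).
  replace ((L+1) * (eps / (L + 1))) with eps in H0 by (field; lra). lra.
Qed.

Definition phiF (phi0 phi1 : R -> R) (t x : R) :=
  1/2 + ((if Rle_dec t (1/2) then phi0 x else phi1 x) - 1/2) * Lam t.

Lemma phiF_Fb phi0 phi1 t x : phiF phi0 phi1 t x = 1/2 + Fb (phi0 x - 1/2) (phi1 x - 1/2) t.
Proof. unfold phiF, Fb. destruct Rle_dec; ring. Qed.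

Lemma vfun_phi phi0 phi1 r x : 0 <= phi0 x <= 1 -> 0 <= phi1 x <= 1 ->
  vfun r (phiF phi0 phi1 r x) =
  (if Rle_dec r (1/2) then phi0 x - 1/2 else phi1 x - 1/2) * (-8 * aE (ec r) * ec r).
Proof.
  intros H0 H1. unfold vfun, phiF, Lam.
  destruct Rle_dec; apply vE_traj; auto; apply ec_range.
Qed.

Lemma Lam_0 : Lam 0 = 1.
Proof. unfold Lam, aE. rewrite ec_id by lra. ring. Qed.
Lemma Lam_1 : Lam 1 = 1.
Proof. unfold Lam, aE. rewrite ec_id by lra. ring. Qed.

Lemma part3 phi0 phi1 : Mon_plus phi0 -> Mon_plus phi1 -> flow_rel phi0 phi1.
Proof.
  intros (M0 & R0 & _ & _) (M1 & R1 & _ & _).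
  exists vfun. split.
  - exists gfun. split; [|split].
    + intros t Ht. split; [apply gfun_L2|]. split.
      * intros x Hx. apply gfun_int; auto.
      * unfold vfun. apply vE_1, ec_range.
    + intros x Hx. apply vfun_meas; auto.
    + exists nfun. split; [intros; apply nfun_int|apply nfun_integrable].
  - exists (phiF phi0 phi1). split; [split; [|split]|].
    + intros t x Ht Hx. pose proof (Lam_range t). unfold phiF.
      specialize (R0 x Hx). specialize (R1 x Hx).
      destruct Rle_dec; split; nra.
    + intros t x y Ht Hx Hxy Hy. unfold phiF. pose proof (Lam_range t).
      destruct Rle_dec.
      * specialize (M0 x y Hx Hxy Hy). nra.
      * specialize (M1 x y Hx Hxy Hy). nra.
    + intros x Hx. specialize (R0 x Hx). specialize (R1 x Hx). split.
      * apply (lip_abs_cont _ 0 1 (8 * (Rabs (phi0 x - 1/2) + Rabs (phi1 x - 1/2)))).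
        { pose proof (Rabs_pos (phi0 x - 1/2)). pose proof (Rabs_pos (phi1 x - 1/2)). lra. }
        intros u w Hu Huw Hw. rewrite !phiF_Fb.
        replace (1 / 2 + Fb (phi0 x - 1 / 2) (phi1 x - 1 / 2) w -
                 (1 / 2 + Fb (phi0 x - 1 / 2) (phi1 x - 1 / 2) u))
          with (Fb (phi0 x - 1 / 2) (phi1 x - 1 / 2) w - Fb (phi0 x - 1 / 2) (phi1 x - 1 / 2) u) by ring.
        apply Fb_lip; auto.
      * intros s t Hs Hst Ht. split.
        -- rewrite !phiF_Fb.
           replace (1 / 2 + Fb (phi0 x - 1 / 2) (phi1 x - 1 / 2) t -
                 (1 / 2 + Fb (phi0 x - 1 / 2) (phi1 x - 1 / 2) s))
             with (Fb (phi0 x - 1 / 2) (phi1 x - 1 / 2) t - Fb (phi0 x - 1 / 2) (phi1 x - 1 / 2) s) by ring.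
           apply flow_HK; auto. intros r Hr. apply vfun_phi; auto.
        -- eexists. apply (flow_HK (- Rabs (phi0 x - 1/2)) (Rabs (phi1 x - 1/2))); auto.
           intros r Hr. rewrite vfun_phi by auto. rewrite ec_id by lra.
           pose proof (aE_range (1 - 2 * r) ltac:(lra)).
           destruct Rle_dec.
           ++ rewrite Rabs_mult. rewrite (Rabs_left1 (-8 * aE (1 - 2 * r) * (1 - 2 * r))).
              ring. assert (0 <= aE (1 - 2 * r) * (1 - 2 * r)) by (apply Rmult_le_pos; lra). lra.
           ++ rewrite Rabs_mult. rewrite (Rabs_right (-8 * aE (1 - 2 * r) * (1 - 2 * r))).
              ring. assert (0 <= aE (1 - 2 * r) * (- (1 - 2 * r))) by (apply Rmult_le_pos; lra). lra.
    + intros x Hx. unfold phiF. rewrite Lam_0, Lam_1.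
      destruct (Rle_dec 0 (1/2)); [|lra]. destruct (Rle_dec 1 (1/2)); [lra|].
      split; field.
Qed.

Theorem mainTheorem3 :
  (forall phi0 phi1, Mon_plus phi0 -> Mon_plus phi1 ->
     flow_rel phi0 phi1 -> flow_rel phi1 phi0) /\
  (forall phi0 phi1 phi2, Mon_plus phi0 -> Mon_plus phi1 -> Mon_plus phi2 ->
     flow_rel phi0 phi1 -> flow_rel phi1 phi2 -> flow_rel phi0 phi2) /\
  (forall phi0 phi1, Mon_plus phi0 -> Mon_plus phi1 -> flow_rel phi0 phi1).
Proof.
  split; [|split].
  - intros phi0 phi1 H0 H1 _. apply part3; auto.
  - intros phi0 phi1 phi2 H0 H1 H2 _ _. apply part3; auto.
  - exact part3.
Qed.
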